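(* Let $\mathcal{M}$ be a matroid with set of bases $\mathcal{B}$ and let $d\geq 2$. If $\mathcal{M}$ has a minor $\mathcal{M}'$ isomorphic to the uniform matroid $\mathcal{U}_{d,2d}$, then there exist $B_1,B_2\in\mathcal{B}$ such that $\Delta_{\{B_1,B_2\}}=\binom{2d-1}{d}$.
   Context: $\mathcal{U}_{r,n}$ denotes the uniform matroid of rank $r$ on $n$ elements. A minor of $\mathcal{M}$ is a matroid $(\mathcal{M}\setminus A)/C$ with $A,C$ disjoint subsets of the ground set. For bases $B_1,B_2$ of $\mathcal{M}$, $\Delta_{\{B_1,B_2\}}$ is the number of unordered pairs $\{D_1,D_2\}$ with $D_1,D_2\in\mathcal{B}$ such that $D_1\cup D_2=B_1\cup B_2$ as multisets. *)

(* Defs.v *)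
From mathcomp Require Import all_boot.
Set Implicit Arguments. Unset Strict Implicit. Unset Printing Implicit Defensive.

Section Matroid.
Variable E : finType.

Definition is_matroid (B : {set {set E}}) : Prop :=
  B != set0 /\
  forall B1 B2, B1 \in B -> B2 \in B -> forall x, x \in B1 :\: B2 ->
    exists2 y, y \in B2 :\: B1 & (B1 :\ x) :|: [set y] \in B.

Definition indep (B : {set {set E}}) (I : {set E}) : bool :=
  [exists B0 in B, I \subset B0].

Definition rank (B : {set {set E}}) (X : {set E}) : nat :=
  \max_(I : {set E} | indep B I && (I \subset X)) #|I|.

(* Bases of the minor (M \ A) / C, on the ground set E \ (A u C)
   (A, C disjoint): X is a basis iff X is a subset of the ground set that is
   independent in the minor and spanning in the minor, where the minor has
   rank function r'(Y) = r(Y u C) - r(C). Note (E\(A u C)) u C = E \ A. *)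
Definition minor_basis (B : {set {set E}}) (A C X : {set E}) : bool :=
  [&& X \subset ~: (A :|: C),
      rank B (X :|: C) - rank B C == #|X| &
      rank B (X :|: C) == rank B (~: A)].

(* Delta_{B1,B2}: number of unordered pairs {D1,D2} of bases with
   D1 + D2 = B1 + B2 as multisets. An unordered pair is represented by
   the set [set D1; D2]. *)
Definition multiset_union_eq (D1 D2 B1 B2 : {set E}) : bool :=
  [forall e, ((e \in D1) + (e \in D2) == (e \in B1) + (e \in B2))%N].

Definition Delta (B : {set {set E}}) (B1 B2 : {set E}) : nat :=
  #|[set P : {set {set E}} | [exists D1 in B, exists D2 in B,
       (P == [set D1; D2]) && multiset_union_eq D1 D2 B1 B2]]|.

End Matroid.

Definition uniform_bases (r n : nat) : {set {set 'I_n}} :=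
  [set Y : {set 'I_n} | #|Y| == r].

Definition has_uniform_minor (E : finType) (B : {set {set E}}) (r n : nat) : Prop :=
  exists (A C : {set E}) (f : 'I_n -> E),
    [/\ [disjoint A & C], injective f,
        f @: [set: 'I_n] = ~: (A :|: C) &
        forall Y : {set 'I_n}, minor_basis B A C (f @: Y) = (Y \in uniform_bases r n)].

(* Main.v *)
Require Import Defs.
From mathcomp Require Import all_boot zify.
Set Implicit Arguments. Unset Strict Implicit. Unset Printing Implicit Defensive.

Lemma exch (E : finType) (B : {set {set E}}) B1 B2 x :
  is_matroid B -> B1 \in B -> B2 \in B -> x \in B1 -> x \notin B2 ->
  exists2 y, (y \in B2) && (y \notin B1) & (B1 :\ x) :|: [set y] \in B.
Proof.
move=> [_ HM] h1 h2 hx hx2.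
have [|y] := HM B1 B2 h1 h2 x; first by rewrite inE hx hx2.
by rewrite inE andbC => hy hB; exists y.
Qed.

Lemma bases_card (E : finType) (B : {set {set E}}) B1 B2 :
  is_matroid B -> B1 \in B -> B2 \in B -> #|B1| = #|B2|.
Proof.
move=> HM.
move: {2}#|B1 :\: B2| (leqnn #|B1 :\: B2|) => n.
elim: n B1 => [|n IH] B1 Hn h1 h2.
  have s12 : B1 \subset B2.
    apply/subsetP=> x xB1; apply/negPn/negP=> xB2.
    by move: Hn; rewrite leqn0 cards_eq0 => /eqP/setP/(_ x); rewrite !inE xB1 xB2.
  have s21 : B2 \subset B1.
    apply/subsetP=> x xB2; apply/negPn/negP=> xB1.
    have [y /andP [yB1 yB2] _] := exch HM h2 h1 xB2 xB1.
    by move/subsetP: s12 => /(_ y yB1); rewrite (negbTE yB2).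
  by apply/eqP; rewrite eqn_leq !subset_leq_card.
case: (set_0Vmem (B1 :\: B2)) => [H0|[x]].
  by apply: (IH B1) => //; rewrite H0 cards0.
rewrite inE => /andP [xB2 xB1].
have [y /andP [yB2 yB1] hB] := exch HM h1 h2 xB1 xB2.
have -> : #|B1| = #|(B1 :\ x) :|: [set y]|.
  rewrite setUC cardsU1 !inE negb_and yB1 orbT.
  by rewrite (cardsD1 x B1) xB1.
apply: IH => //.
have: #|B1 :\: B2| = (#|((B1 :\ x) :|: [set y]) :\: B2|).+1.
  rewrite (cardsD1 x (B1 :\: B2)) inE xB1 xB2 /= add1n; congr (_.+1).
  apply: eq_card => z; rewrite !inE.
  case: (z =P y) => [->|_]; first by rewrite yB2 (negbTE yB1) /= andbF.
  by rewrite orbF andbCA.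

lia.
Qed.

Lemma indep_sub (E : finType) (B : {set {set E}}) (I J : {set E}) :
  indep B I -> J \subset I -> indep B J.
Proof.
move=> /existsP [B0 /andP [h0 hI]] hJ; apply/existsP; exists B0.
by rewrite h0 (subset_trans hJ hI).
Qed.

Lemma indep_basis (E : finType) (B : {set {set E}}) (B0 K : {set E}) :
  is_matroid B -> B0 \in B -> indep B K -> #|B0| <= #|K| -> K \in B.
Proof.
move=> HM h0 /existsP [B1 /andP [h1 hK]] hc.
have: K == B1 by rewrite eqEcard hK (bases_card HM h1 h0).
by move/eqP->.
Qed.

Lemma basis_indep (E : finType) (B : {set {set E}}) (B0 : {set E}) :
  B0 \in B -> indep B B0.
Proof. by move=> h; apply/existsP; exists B0; rewrite h subxx. Qed.

Lemma augment (E : finType) (B : {set {set E}}) (I1 I2 : {set E}) :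
  is_matroid B -> indep B I1 -> indep B I2 -> #|I1| < #|I2| ->
  exists2 x, x \in I2 :\: I1 & indep B (x |: I1).
Proof.
move=> HM hI1 hI2 hlt.
case: (boolP [exists x in I2 :\: I1, indep B (x |: I1)]) => [/exists_inP [x hx hi]|hN];
  first by exists x.
have H : forall x, x \in I2 -> x \notin I1 -> ~~ indep B (x |: I1).
  move=> x h2 h1; apply: contraNN hN => hi; apply/exists_inP; exists x => //.
  by rewrite inE h1 h2.
have [B1 hB1 s1] := exists_inP hI1.
have [B2 hB2 s2] := exists_inP hI2.
pose P := fun p : {set E} * {set E} => [&& p.1 \in B, p.2 \in B, I1 \subset p.1 & I2 \subset p.2].
pose F := fun p : {set E} * {set E} => #|p.2 :\: (I2 :|: p.1)|.
have P0 : P (B1, B2) by rewrite /P /= hB1 hB2 s1 s2.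
case: (arg_minnP F P0) => [[C1 C2]] /and4P [/= hC1 hC2 sC1 sC2] Hmin.
have st1 : forall y, y \in C2 -> y \notin C1 -> y \in I2.
  move=> y yC2 yC1; apply/negPn/negP => yI2.
  have [z /andP [zC1 zC2] hB] := exch HM hC2 hC1 yC2 yC1.
  have Pn : P (C1, C2 :\ y :|: [set z]).
    rewrite /P /= hC1 hB sC1 /=; apply/subsetP => w wI2.
    have wy : w != y by apply: contraNneq yI2 => <-.
    by rewrite !inE wy (subsetP sC2 w wI2).
  have := Hmin _ Pn; rewrite /F /=.
  have -> : #|C2 :\: (I2 :|: C1)| = (#|(C2 :\: (I2 :|: C1)) :\ y|).+1.
    by rewrite (cardsD1 y (C2 :\: _)) !inE yC2 (negbTE yI2) (negbTE yC1).
  have : #|(C2 :\ y :|: [set z]) :\: (I2 :|: C1)| <= #|(C2 :\: (I2 :|: C1)) :\ y|.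
    apply: subset_leq_card; apply/subsetP => w; rewrite !inE.
    case: (w =P z) => [->|_]; first by rewrite zC1 !orbT andbF.
    by rewrite orbF => /andP [-> /andP [-> ->]].
  by move=> a b; move: (leq_trans b a); rewrite ltnn.
have st2 : forall y, y \in C1 -> y \notin C2 -> y \in I1.
  move=> y yC1 yC2; apply/negPn/negP => yI1.
  have [z /andP [zC2 zC1] hB] := exch HM hC1 hC2 yC1 yC2.
  have zI2 := st1 z zC2 zC1.
  have zI1 : z \notin I1 by apply/negP => /(subsetP sC1); rewrite (negbTE zC1).
  apply: (negP (H z zI2 zI1)); apply/exists_inP; exists (C1 :\ y :|: [set z]) => //.
  apply/subsetP => w; rewrite !inE => /orP [/eqP ->|wI1]; first by rewrite eqxx orbT.
  have wy : w != y by apply: contraNneq yI1 => <-.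
  by rewrite wy (subsetP sC1 w wI1).
have st3 : forall y, y \in I2 -> y \in C1 -> y \in I1.
  move=> y yI2 yC1; apply/negPn/negP => yI1; apply: (negP (H y yI2 yI1)).
  by apply/exists_inP; exists C1 => //; rewrite subUset sub1set yC1 sC1.
have e := bases_card HM hC1 hC2.
have c1 : #|C1 :\: C2| <= #|I1 :\: I2|.
  apply: subset_leq_card; apply/subsetP => w; rewrite !inE => /andP [wC2 wC1].
  rewrite (st2 w wC1 wC2) andbT; apply: contra wC2; exact: (subsetP sC2).
have c2 : #|I2 :\: I1| <= #|C2 :\: C1|.
  apply: subset_leq_card; apply/subsetP => w; rewrite !inE => /andP [wI1 wI2].
  rewrite (subsetP sC2 w wI2) andbT; apply: contra wI1; exact: st3.
have h1 := cardsID C2 C1; have h2 := cardsID C1 C2; have h3 := cardsID I2 I1.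
have h4 := cardsID I1 I2; rewrite setIC in h1; rewrite setIC in h3.
clear -e c1 c2 hlt h1 h2 h3 h4; lia.
Qed.

Lemma augment_n (E : finType) (B : {set {set E}}) (I J : {set E}) :
  is_matroid B -> indep B I -> indep B J -> #|I| <= #|J| ->
  exists K : {set E}, [/\ I \subset K, K \subset I :|: J, indep B K & #|K| = #|J|].
Proof.
move=> HM; move: {2}(#|J| - #|I|) (erefl (#|J| - #|I|)) => k.
elim: k I => [|k IH] I hk hI hJ hle.
  by exists I; split => //; [exact: subsetUl | lia].
have hlt : #|I| < #|J| by lia.
have [x hx hi] := augment HM hI hJ hlt.
move: hx; rewrite inE => /andP [xI xJ].
have c : #|x |: I| = #|I|.+1 by rewrite cardsU1 xI.
have [K [s1 s2 hK cK]] := IH (x |: I) ltac:(lia) hi hJ ltac:(lia).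
exists K; split => //.
  by apply: subset_trans s1; apply: subsetUr.
apply: subset_trans s2 _; apply/subsetP => w; rewrite !inE.
by case/orP => [/orP [/eqP ->|->]|->]; rewrite ?xJ ?orbT.
Qed.

Lemma rank_ge (E : finType) (B : {set {set E}}) (I X : {set E}) :
  indep B I -> I \subset X -> #|I| <= rank B X.
Proof. by move=> h1 h2; rewrite /rank; apply: leq_bigmax_cond; rewrite h1 h2. Qed.

Lemma rank_wit (E : finType) (B : {set {set E}}) (X : {set E}) :
  is_matroid B -> exists I, [/\ indep B I, I \subset X & #|I| = rank B X].
Proof.
move=> [HB _].
pose A := [pred I : {set E} | indep B I && (I \subset X)].
have hA : 0 < #|A|.
  apply/card_gt0P; exists set0; rewrite inE /= sub0set andbT.
  have [B0 h0] := set0Pn _ HB; apply/exists_inP; exists B0 => //; exact: sub0set.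
have [I0 hI0 eq] := eq_bigmax_cond (fun I : {set E} => #|I|) hA.
move: hI0; rewrite inE /= => /andP [h1 h2].
by exists I0; split => //; rewrite /rank; symmetry; exact: eq.
Qed.

Lemma card_disjU (E : finType) (P Q : {set E}) :
  (forall x, x \in P -> x \notin Q) -> #|P :|: Q| = #|P| + #|Q|.
Proof.
move=> H; rewrite cardsU.
have -> : P :&: Q = set0.
  apply/setP => x; rewrite !inE; case: (boolP (x \in P)) => //= /H /negbTE ->//.
by rewrite cards0 subn0.
Qed.

Lemma msu_val (E : finType) (T G X : {set E}) e :
  X \subset G -> (forall x, x \in T -> x \notin G) ->
  ((e \in T :|: X) + (e \in T :|: (G :\: X)) = (e \in T) + (e \in T) + (e \in G))%N.
Proof.
move=> /subsetP sX hT.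
have a : (e \in T) ==> (e \notin G) by apply/implyP; exact: hT.
have b : (e \in X) ==> (e \in G) by apply/implyP; exact: sX.
move: a b; rewrite !inE.
by case: (e \in T); case: (e \in G); case: (e \in X).
Qed.

Lemma decomp (E : finType) (T G D1 D2 : {set E}) :
  (forall x, x \in T -> x \notin G) ->
  (forall e, ((e \in D1) + (e \in D2) = (e \in T) + (e \in T) + (e \in G))%N) ->
  D1 = T :|: (D1 :&: G) /\ D2 = T :|: (G :\: (D1 :&: G)).
Proof.
move=> hT H; split; apply/setP => e;
have a : (e \in T) ==> (e \notin G) by apply/implyP; exact: hT.
all: move: (H e) a; rewrite !inE.
all: by case: (e \in D1); case: (e \in D2); case: (e \in T); case: (e \in G).
Qed.

Lemma stripT (E : finType) (T G X : {set E}) :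
  (forall x, x \in T -> x \notin G) -> X \subset G -> (T :|: X) :&: G = X.
Proof.
move=> hT /subsetP sX; apply/setP => e.
have a : (e \in T) ==> (e \notin G) by apply/implyP; exact: hT.
have b : (e \in X) ==> (e \in G) by apply/implyP; exact: sX.
move: a b; rewrite !inE.
by case: (e \in T); case: (e \in G); case: (e \in X).
Qed.

Theorem proposition3p3 (E : finType) (B : {set {set E}}) (d : nat) :
  is_matroid B -> 2 <= d -> has_uniform_minor B d (2 * d) ->
  exists B1, exists2 B2, B1 \in B /\ B2 \in B & Delta B B1 B2 = 'C((2 * d).-1, d).
Proof.
move=> HM hd [A [C [f [hAC finj imf mb]]]].
set G := ~: (A :|: C) in imf mb *.
have GAC : forall x, x \in G -> (x \notin A) && (x \notin C).
  by move=> x; rewrite !inE negb_or.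
have CA : forall x, x \in C -> x \notin A.
  by move=> x xC; rewrite (disjointFl hAC xC).
have cardG : #|G| = 2 * d by rewrite -imf card_imset // cardsT card_ord.
have HX : forall X : {set E}, X \subset G -> #|X| = d -> minor_basis B A C X.
  move=> X sX cX.
  have eX : f @: (f @^-1: X) = X.
    apply/setP => e; apply/imsetP/idP => [[i]|eX]; first by rewrite inE => h ->.
    have : e \in f @: [set: 'I_(2 * d)] by rewrite imf (subsetP sX).
    by case/imsetP => i _ ei; exists i => //; rewrite inE -ei.
  rewrite -eX mb inE; apply/eqP.
  by rewrite -(card_imset _ finj) eX.
set r0 := rank B C.
have Hr : forall X : {set E}, X \subset G -> #|X| = d ->
    rank B (X :|: C) = r0 + d /\ rank B (~: A) = r0 + d.
  move=> X sX cX; move: (HX X sX cX) => /and3P [_ /eqP h1 /eqP h2].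
  rewrite cX in h1; rewrite -h2.
  suff -> : rank B (X :|: C) = r0 + d by [].
  move: h1; rewrite -/r0; clear -hd; lia.
have [I [hI sIC cI]] := rank_wit C HM.
have IG : forall x, x \in I -> x \notin G.
  by move=> x /(subsetP sIC) xC; rewrite !inE xC orbT.
have st1 : forall X : {set E}, X \subset G -> #|X| = d -> indep B (I :|: X).
  move=> X sX cX; have [hr _] := Hr X sX cX.
  have [W [hW sW cW]] := rank_wit (X :|: C) HM.
  have hle : #|I| <= #|W| by rewrite cI cW hr leq_addr.
  have [K [s1 s2 hK cK]] := augment_n HM hI hW hle.
  have kc : #|K :&: C| <= r0.
    by apply: rank_ge; [apply: indep_sub hK (subsetIl _ _) | apply: subsetIr].
  have kd : K :\: C \subset X.
    apply/subsetP => w; rewrite inE => /andP [wC wK].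
    move/subsetP: s2 => /(_ w wK); rewrite inE => /orP [/(subsetP sIC)|/(subsetP sW)].
      by rewrite (negbTE wC).
    by rewrite inE (negbTE wC) orbF.
  have hID := cardsID C K.
  have eKX : K :\: C = X.
    apply/eqP; rewrite eqEcard kd cX; rewrite cK cW hr in hID.
    clear -hID kc; lia.
  by apply: indep_sub hK _; rewrite subUset s1 -eKX subsetDl.
have [f0 f0G] : exists f0, f0 \in G.
  by apply/card_gt0P; rewrite cardG; clear -hd; lia.
pose Xs := [set X : {set E} | X \subset G :\ f0 & #|X| == d].
have cXs : #|Xs| = 'C((2 * d).-1, d).
  rewrite /Xs cards_draws; congr 'C(_, _).
  move: (cardsD1 f0 G); rewrite f0G cardG; clear; lia.
have [X0 hX0] : exists X0, X0 \in Xs.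
  by apply/card_gt0P; rewrite cXs bin_gt0; clear -hd; lia.
move: (hX0); rewrite inE => /andP [sX0 /eqP cX0].
have sX0' : X0 \subset G := subset_trans sX0 (subD1set _ _).
have [D0 hD0 sD0] := exists_inP (st1 X0 sX0' cX0).
have hRA : rank B (~: A) = r0 + d by case: (Hr X0 sX0' cX0).
have cIX : forall X : {set E}, X \subset G -> #|X| = d -> #|I :|: X| = r0 + d.
  move=> X sX cX; rewrite card_disjU ?cI ?cX // => x /IG xG.
  by apply: contra xG => /(subsetP sX).
have IXA : forall X : {set E}, X \subset G -> I :|: X \subset ~: A.
  move=> X sX; rewrite subUset; apply/andP; split; apply/subsetP => x.
    by move=> /(subsetP sIC) /CA; rewrite inE.
  by move=> /(subsetP sX) /GAC /andP [h _]; rewrite inE.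
have eD0 : D0 :\: A = I :|: X0.
  apply/esym/eqP; rewrite eqEcard cIX //.
  have -> : I :|: X0 \subset D0 :\: A.
    by rewrite setDE subsetI sD0 IXA.
  rewrite -hRA; apply: rank_ge; [exact: indep_sub (basis_indep hD0) (subsetDl _ _) | exact: subsetDr].
set Ka := D0 :&: A.
set T := I :|: Ka.
have hTG : forall x, x \in T -> x \notin G.
  move=> x; rewrite inE => /orP [/IG //|]; rewrite inE => /andP [_ xA].
  by rewrite !inE xA.
have hBT : forall X : {set E}, X \subset G -> #|X| = d -> T :|: X \in B.
  move=> X sX cX.
  have hle : #|I :|: X| <= #|D0|.
    by rewrite cIX // -(cIX X0) //; apply: subset_leq_card.
  have [K [s1 s2 hK cK]] := augment_n HM (st1 X sX cX) (basis_indep hD0) hle.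
  have hKB : K \in B by apply: (indep_basis HM hD0 hK); rewrite cK.
  have eKD : K :\: A = I :|: X.
    apply/esym/eqP; rewrite eqEcard cIX //.
    have -> : I :|: X \subset K :\: A by rewrite setDE subsetI s1 IXA.
    rewrite -hRA; apply: rank_ge; [exact: indep_sub hK (subsetDl _ _) | exact: subsetDr].
  have eKA : K :&: A = Ka.
    apply/eqP; rewrite eqEcard; apply/andP; split.
      apply/subsetP => w; rewrite !inE => /andP [wK wA]; rewrite wA andbT.
      move/subsetP: s2 => /(_ w wK); rewrite inE => /orP [wIX|//].
      by move/subsetP: (IXA X sX) => /(_ w wIX); rewrite inE wA.
    have h1 := cardsID A K; have h2 := cardsID A D0.
    rewrite eKD cIX // in h1; rewrite eD0 cIX // in h2.
    rewrite /Ka; clear -h1 h2 cK; lia.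
  have -> : T :|: X = K by rewrite -(setID K A) eKA eKD /T setUA (setUC Ka I).
  exact: hKB.
have cGX : forall X : {set E}, X \subset G -> #|X| = d -> #|G :\: X| = d.
  move=> X sX cX; rewrite cardsD (setIidPr sX) cardG cX; clear; lia.
exists (T :|: X0); exists (T :|: (G :\: X0)).
  by split; apply: hBT => //; [exact: subsetDl | exact: cGX].
have cT : forall X : {set E}, X \subset G -> #|T :|: X| = #|T| + #|X|.
  move=> X sX; apply: card_disjU => x /hTG; apply: contra; exact: (subsetP sX).
pose g := fun X : {set E} => [set T :|: X; T :|: (G :\: X)].
have claim : forall D1 D2 : {set E}, D1 \in B ->
    (forall e, ((e \in D1) + (e \in D2) = (e \in T) + (e \in T) + (e \in G))%N) ->
    f0 \notin D1 -> exists2 X, X \in Xs & [set D1; D2] = g X.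
  move=> D1 D2 hD1 hm f0D; have [e1 e2] := decomp hTG hm.
  exists (D1 :&: G); last by rewrite /g -e1 -e2.
  rewrite inE; apply/andP; split.
    apply/subsetP => w; rewrite !inE => /andP [wD wG]; rewrite wG andbT.
    by apply: contraNneq f0D => <-.
  have h1 := bases_card HM hD1 (hBT X0 sX0' cX0).
  rewrite cT // cX0 e1 cT ?subsetIr // in h1.
  by apply/eqP; clear -h1; lia.
rewrite /Delta.
have -> : [set P : {set {set E}} | [exists D1 in B, exists D2 in B,
       (P == [set D1; D2]) && multiset_union_eq D1 D2 (T :|: X0) (T :|: (G :\: X0))]]
     = g @: Xs.
  apply/setP => P; rewrite inE; apply/idP/imsetP.
    case/exists_inP => D1 hD1 /exists_inP [D2 hD2 /andP [/eqP -> /forallP hm]].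
    have hm' : forall e, ((e \in D1) + (e \in D2) = (e \in T) + (e \in T) + (e \in G))%N.
      by move=> e; rewrite (eqP (hm e)) msu_val.
    case: (boolP (f0 \in D1)) => f0D1; last exact: claim.
    have f0D2 : f0 \notin D2.
      have f0T : f0 \notin T by apply/negP => /hTG; rewrite f0G.
      move: (hm' f0); rewrite f0D1 f0G (negbTE f0T).
      by case: (f0 \in D2).
    have [X hX eX] := claim D2 D1 hD2 (fun e => etrans (addnC _ _) (hm' e)) f0D2.
    by exists X => //; rewrite -eX setUC.
  case => X hX ->; move: (hX); rewrite inE => /andP [sXf /eqP cX].
  have sX : X \subset G := subset_trans sXf (subD1set _ _).
  apply/exists_inP; exists (T :|: X); first exact: hBT.
  apply/exists_inP; exists (T :|: (G :\: X)).
    by apply: hBT; [exact: subsetDl | exact: cGX].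
  rewrite eqxx /=; apply/forallP => e; rewrite !msu_val //.
rewrite -cXs; apply: card_in_imset => X Y hX hY /= eq.
move: (hX) (hY); rewrite !inE => /andP [sXf _] /andP [sYf _].
have sX : X \subset G := subset_trans sXf (subD1set _ _).
have sY : Y \subset G := subset_trans sYf (subD1set _ _).
have : T :|: X \in g Y by rewrite -eq set21.
rewrite /g in_set2 => /orP [/eqP h|/eqP h].
  by rewrite -(stripT hTG sX) h stripT.
have eXY : X = G :\: Y by rewrite -(stripT hTG sX) h stripT // subsetDl.
have : f0 \in X.
  rewrite eXY inE f0G andbT; apply/negP => /(subsetP sYf); by rewrite !inE eqxx.
by move/(subsetP sXf); rewrite !inE eqxx.
Qed.
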